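(* Let $(M,g,S)$, $p$, $u$ and the coordinates $(x',y',z',t')$ be as in the context. Then $u$, $Su$, $S^2u$, $S^3u$ are isotropic vectors with respect to $\tilde g$, and their endpoints lie on the surface in $T_pM$ given by $$x'^2+y'^2=\tfrac12,\qquad z'^2+t'^2=\tfrac12.$$
   Context: $M$ is a 4-dimensional differentiable manifold with a positive definite metric $g$ and a tensor field $S$ of type $(1,1)$ whose components in some local coordinate system form the matrix with rows $(0,1,0,0)$, $(0,0,1,0)$, $(0,0,0,1)$, $(-1,0,0,0)$; hence $S^4=-\mathrm{id}$, and $g(Su,Sv)=g(u,v)$ for all vector fields $u,v$. The associated metric is $\tilde g(u,v)=g(u,Sv)+g(Su,v)$; a nonzero vector $w$ is isotropic if $\tilde g(w,w)=0$. Let $p\in M$ and $u\in T_pM$ with $\{u,Su,S^2u,S^3u\}$ a $g$-orthonormal basis of $T_pM$. Coordinates $(x,y,z,t)$ on $T_pM$ are given by $v=xu+ySu+zS^2u+tS^3u$, and coordinates $(x',y',z',t')$ by $x=\frac12(x'-y'+z'-t')$, $y=\frac{\sqrt2}{2}(-y'+t')$, $z=-\frac12(x'+y'+z'+t')$, $t=\frac{\sqrt2}{2}(-x'+z')$. The endpoint of a vector $w\in T_pM$ is the point $w$ of $T_pM$. *)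

(* Defs.v *)
(* The tangent space T_pM is modelled by the coordinate
   space 'cV[R]_4 of the given local coordinate system at p. *)
From HB Require Import structures.
From mathcomp Require Import all_boot all_order all_algebra.
Set Implicit Arguments. Unset Strict Implicit. Unset Printing Implicit Defensive.
Import Order.TTheory GRing.Theory Num.Theory.
Local Open Scope ring_scope.

Definition Smx {R : nzRingType} : 'M[R]_4 :=
  \matrix_(i < 4, j < 4)
    (if (i : nat) == 3%N then (if (j : nat) == 0%N then -1 else 0)
     else if (j : nat) == i.+1 then 1 else 0).

Definition Sop {R : nzRingType} (v : 'cV[R]_4) : 'cV[R]_4 := Smx *m v.

Definition Spow {R : nzRingType} (k : nat) (v : 'cV[R]_4) : 'cV[R]_4 :=
  iter k Sop v.

Definition bil {R : nzRingType} (G : 'M[R]_4) (u v : 'cV[R]_4) : R :=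
  (u^T *m G *m v) 0 0.

Definition gtilde {R : nzRingType} (G : 'M[R]_4) (u v : 'cV[R]_4) : R :=
  bil G u (Sop v) + bil G (Sop u) v.

Definition isotropic {R : nzRingType} (G : 'M[R]_4) (w : 'cV[R]_4) : Prop :=
  w != 0 /\ gtilde G w w = 0.

Definition coords_to_vec {R : nzRingType} (u : 'cV[R]_4) (x y z t : R) :=
  x *: u + y *: Spow 1 u + z *: Spow 2 u + t *: Spow 3 u.

Definition primed_to_vec {R : rcfType} (u : 'cV[R]_4) (x' y' z' t' : R) :=
  coords_to_vec u ((x' - y' + z' - t') / 2)
                  (Num.sqrt 2 / 2 * (- y' + t'))
                  (- (x' + y' + z' + t') / 2)
                  (Num.sqrt 2 / 2 * (- x' + z')).

Definition on_surface {R : rcfType} (u w : 'cV[R]_4) : Prop :=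
  exists x' y' z' t' : R, w = primed_to_vec u x' y' z' t' /\
    x' ^+ 2 + y' ^+ 2 = 1 / 2 /\ z' ^+ 2 + t' ^+ 2 = 1 / 2.

(* Main.v *)
Require Import Defs.
From HB Require Import structures.
From mathcomp Require Import all_boot all_order all_algebra ring lra.
Import Order.TTheory GRing.Theory Num.Theory.
Local Open Scope ring_scope.

Lemma SopE (R : nzRingType) (v : 'cV[R]_4) (i : 'I_4) (j : 'I_1) :
  Sop v i j = if (i : nat) == 3%N then - v ord0 j else v (inord i.+1) j.
Proof.
rewrite /Sop !mxE !big_ord_recl big_ord0 /= !mxE.
case: i => [[|[|[|[|//]]]] Hi] /=;
rewrite ?mul1r ?mul0r ?addr0 ?add0r ?mulN1r //; congr (v _ j); apply/val_inj; rewrite /= inordK //.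
Qed.

Lemma inord4 k (H : (k < 4)%N) : (inord k : 'I_4) = Ordinal H.
Proof. by apply/val_inj; rewrite /= inordK. Qed.

Lemma S4 (R : nzRingType) (v : 'cV[R]_4) : Sop (Sop (Sop (Sop v))) = - v.
Proof.
apply/matrixP => i j; rewrite [RHS]mxE.
case: i => [[|[|[|[|//]]]] Hi];
do 4! (rewrite SopE /= ?(@inord4 1 isT) ?(@inord4 2 isT) ?(@inord4 3 isT) /=);
rewrite ?opprK //; congr (- v _ j); apply/val_inj => //.
Qed.

Lemma bil00 (R : nzRingType) (G : 'M[R]_4) : bil G 0 0 = 0.
Proof. by rewrite /bil trmx0 mul0mx mul0mx mxE. Qed.
Lemma bilNr (R : nzRingType) (G : 'M[R]_4) a b : bil G a (- b) = - bil G a b.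
Proof. by rewrite /bil mulmxN mxE. Qed.
Lemma bilNl (R : nzRingType) (G : 'M[R]_4) a b : bil G (- a) b = - bil G a b.
Proof. by rewrite /bil linearN /= mulNmx mulNmx mxE. Qed.

Theorem theorem3p4 (R : rcfType) (G : 'M[R]_4)
  (G_sym : G^T = G)
  (G_pos : forall v : 'cV[R]_4, v != 0 -> 0 < bil G v v)
  (G_S : forall v w : 'cV[R]_4, bil G (Sop v) (Sop w) = bil G v w)
  (u : 'cV[R]_4)
  (u_on : forall i j : 'I_4, bil G (Spow i u) (Spow j u) = (i == j)%:R) :
  forall k : 'I_4, isotropic G (Spow k u) /\ on_surface u (Spow k u).
Proof.
have U : forall i j (Hi : (i < 4)%N) (Hj : (j < 4)%N),
    bil G (Spow i u) (Spow j u) = (i == j)%:R.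
  by move=> i j Hi Hj; exact: (u_on (Ordinal Hi) (Ordinal Hj)).
have NZ : forall i, (i < 4)%N -> Spow i u != 0.
  move=> i Hi; apply/eqP => H; have := U i i Hi Hi; rewrite H bil00 eqxx.
  by move/esym/eqP; rewrite oner_eq0.
set s := Num.sqrt (2 : R).
have hs : s ^+ 2 = 2 by rewrite sqr_sqrtr // ler0n.
have hs0 : 0 <= s by rewrite sqrtr_ge0.
have E : forall x y z t, coords_to_vec u x y z t =
   x *: Spow 0 u + y *: Spow 1 u + z *: Spow 2 u + t *: Spow 3 u by [].
case=> [[|[|[|[|//]]]] Hk] /=; split; rewrite /isotropic /on_surface.
- split; first exact: (NZ 0%N isT).
  change (bil G (Spow 0 u) (Spow 1 u) + bil G (Spow 1 u) (Spow 0 u) = 0).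
  by rewrite (U 0 1 isT isT) (U 1 0 isT isT) addr0.
- exists (1/2), (-1/2), (1/2), (-1/2); split; last by split; nra.
  rewrite /primed_to_vec E.
  have -> : (1 / 2 - -1 / 2 + 1 / 2 - -1 / 2) / 2 = 1 :> R by nra.
  have -> : s / 2 * (- (-1 / 2) + -1 / 2) = 0 by nra.
  have -> : - (1 / 2 + -1 / 2 + 1 / 2 + -1 / 2) / 2 = 0 :> R by nra.
  have -> : s / 2 * (- (1 / 2) + 1 / 2) = 0 by nra.
  by rewrite scale1r !scale0r !(add0r, addr0).
- split; first exact: (NZ 1%N isT).
  change (bil G (Spow 1 u) (Spow 2 u) + bil G (Spow 2 u) (Spow 1 u) = 0).
  by rewrite (U 1 2 isT isT) (U 2 1 isT isT) addr0.
- exists 0, (-s/2), 0, (s/2); split; last by split; nra.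
  rewrite /primed_to_vec E.
  have -> : (0 - - s / 2 + 0 - s / 2) / 2 = 0 by nra.
  have -> : s / 2 * (- (- s / 2) + s / 2) = 1 by nra.
  have -> : - (0 + - s / 2 + 0 + s / 2) / 2 = 0 by nra.
  have -> : s / 2 * (- 0 + 0) = 0 by nra.
  by rewrite scale1r !scale0r !(add0r, addr0).
- split; first exact: (NZ 2%N isT).
  change (bil G (Spow 2 u) (Spow 3 u) + bil G (Spow 3 u) (Spow 2 u) = 0).
  by rewrite (U 2 3 isT isT) (U 3 2 isT isT) addr0.
- exists (-1/2), (-1/2), (-1/2), (-1/2); split; last by split; nra.
  rewrite /primed_to_vec E.
  have -> : (-1 / 2 - -1 / 2 + -1 / 2 - -1 / 2) / 2 = 0 :> R by nra.
  have -> : s / 2 * (- (-1 / 2) + -1 / 2) = 0 by nra.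
  have -> : - (-1 / 2 + -1 / 2 + -1 / 2 + -1 / 2) / 2 = 1 :> R by nra.
  by rewrite scale1r !scale0r !(add0r, addr0).
- split; first exact: (NZ 3%N isT).
  have e4 : Sop (Spow 3 u) = - Spow 0 u by exact: S4.
  rewrite /gtilde e4 bilNr bilNl.
  by rewrite (U 3 0 isT isT) (U 0 3 isT isT) oppr0 addr0.
- exists (-s/2), 0, (s/2), 0; split; last by split; nra.
  rewrite /primed_to_vec E.
  have -> : (- s / 2 - 0 + s / 2 - 0) / 2 = 0 by nra.
  have -> : s / 2 * (- 0 + 0) = 0 by nra.
  have -> : - (- s / 2 + 0 + s / 2 + 0) / 2 = 0 by nra.
  have -> : s / 2 * (- (- s / 2) + s / 2) = 1 by nra.
  by rewrite scale1r !scale0r !(add0r, addr0).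
Qed.
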